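(* Let $\mathcal{G}=(V,E)$ be an $m$-uniform connected hypergraph with $m>2$ and $n$ vertices. Then $$\lambda_n(L_{\mathcal{G}})\le\max_{i\in V}\frac{2d_i(m-1)-1+\sqrt{4(m-1)^2d_i m_i D_{\max}^2-2d_i(m-1)+1}}{2(m-1)},$$ where $m_i=\big(\sum_{j\sim i}d_j\big)/\big(d_i(m-1)\big)$ and $D_{\max}=\max\{d_{xy}: x,y\in V\}$.
   Context: A hypergraph $\mathcal{G}=(V,E)$ has a finite vertex set $V$ and a set $E$ of subsets of $V$ (edges); it is $m$-uniform if every edge has exactly $m$ vertices. Distinct vertices $i,j$ are adjacent ($i\sim j$) if some edge contains both. The degree $d_i$ is the number of edges containing $i$, and the codegree $d_{xy}$ of distinct vertices $x,y$ is the number of edges containing both. The Laplacian $L_{\mathcal{G}}$ has $(L_{\mathcal{G}})_{ii}=d_i$ and $(L_{\mathcal{G}})_{ij}=-d_{ij}/(m-1)$ for $i\ne j$; $\lambda_n(L_{\mathcal{G}})$ is its largest eigenvalue. *)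

(* Defs.v *)
From HB Require Import structures.
From mathcomp Require Import all_boot all_order all_algebra.
Set Implicit Arguments. Unset Strict Implicit. Unset Printing Implicit Defensive.
Import Order.TTheory GRing.Theory Num.Theory.
Local Open Scope ring_scope.

Section Hypergraph.
Variables (n : nat) (E : {set {set 'I_n}}).

Definition uniform (m : nat) : Prop := forall e, e \in E -> #|e| = m.

Definition hdeg (i : 'I_n) : nat := #|[set e in E | i \in e]|.

Definition hcodeg (x y : 'I_n) : nat := #|[set e in E | (x \in e) && (y \in e)]|.

Definition hadj : rel 'I_n :=
  fun i j => (i != j) && [exists e in E, (i \in e) && (j \in e)].

Definition hconnected : Prop := forall i j : 'I_n, connect hadj i j.

Definition Dmax : nat := \max_(x : 'I_n) \max_(y : 'I_n | y != x) hcodeg x y.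

Variable R : rcfType.

Definition hlaplacian (m : nat) : 'M[R]_n :=
  \matrix_(i, j) (if i == j then (hdeg i)%:R
                  else - ((hcodeg i j)%:R / (m - 1)%:R)).

Definition mi (m : nat) (i : 'I_n) : R :=
  (\sum_(j | hadj i j) hdeg j)%:R / ((hdeg i)%:R * (m - 1)%:R).

Definition bound_term (m : nat) (i : 'I_n) : R :=
  let d := (hdeg i)%:R in let m1 := (m - 1)%:R in
  (2 * d * m1 - 1 +
   Num.sqrt (4 * m1 ^+ 2 * d * mi m i * (Dmax%:R) ^+ 2 - 2 * d * m1 + 1))
  / (2 * m1).

End Hypergraph.

(* Main.v *)
From HB Require Import structures.
From mathcomp Require Import all_boot all_order all_algebra.
From mathcomp Require Import ring lra zify.
Set Implicit Arguments. Unset Strict Implicit. Unset Printing Implicit Defensive.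
Import Order.TTheory GRing.Theory Num.Theory.
Local Open Scope ring_scope.
Require Import Defs.

Lemma qf (R : realFieldType) n (C : 'I_n -> 'I_n -> R) (X : 'I_n -> R) :
  (forall i k, C i k = C k i) -> (forall i k, i != k -> 0 <= C i k) ->
  \sum_i \sum_k C i k * X i * X k <= \sum_i (\sum_k C i k) * X i ^+ 2.
Proof.
move=> Cs Cp; rewrite -subr_ge0.
have E1 : \sum_i (\sum_k C i k) * X i ^+ 2 - \sum_i \sum_k C i k * X i * X k
   = \sum_i \sum_k C i k * (X i ^+ 2 - X i * X k).
  rewrite -sumrB; apply: eq_bigr => i _; rewrite mulr_suml -sumrB.
  by apply: eq_bigr => k _; ring.
have E2 : \sum_i \sum_k C i k * (X i ^+ 2 - X i * X k)
   = \sum_i \sum_k C i k * (X k ^+ 2 - X k * X i).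
  rewrite exchange_big; apply: eq_bigr => i _; apply: eq_bigr => k _.
  by rewrite Cs.
rewrite E1.
have -> : \sum_i \sum_k C i k * (X i ^+ 2 - X i * X k) =
  (\sum_i \sum_k C i k * (X i - X k) ^+ 2) / 2.
  apply: (@mulIf _ 2); first by rewrite pnatr_eq0.
  rewrite divfK ?pnatr_eq0 // mulr_natr mulr2n {2}E2 -big_split /=.
  apply: eq_bigr => i _; rewrite -big_split /=; apply: eq_bigr => k _; ring.
apply: divr_ge0 => //; apply: sumr_ge0 => i _; apply: sumr_ge0 => k _.
have [->|ik] := eqVneq i k; first by rewrite subrr expr0n mulr0.
by apply: mulr_ge0; [exact: Cp | exact: sqr_ge0].
Qed.

Lemma key (R : realFieldType) n (A : 'I_n -> 'I_n -> R) (dd X : 'I_n -> R) (t a : R) :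
 0 < t -> (forall i j, A i j = A j i) ->
 (forall i k, i != k -> A i k <= \sum_j A i j * A j k) ->
 (forall j, \sum_k A j k = t * dd j) ->
 (forall j, \sum_i A j i * X i = t * (dd j - a) * X j) ->
 \sum_j (t * (a - dd j)^+2 + a - \sum_k A j k * dd k) * X j ^+ 2 <= 0.
Proof.
move=> t0 As Atri Arow Eq.
pose C i k := \sum_j A j i * A j k - A i k.
have Cs : forall i k, C i k = C k i.
  by move=> i k; rewrite /C As; congr (_ - _); apply: eq_bigr => j _; rewrite mulrC.
have Cp : forall i k, i != k -> 0 <= C i k.
  move=> i k ik; rewrite /C subr_ge0; rewrite (le_trans (Atri _ _ ik)) //.
  by rewrite le_eqVlt; apply/orP; left; apply/eqP; apply: eq_bigr => j _; rewrite As.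
have rowC : forall i, \sum_k C i k = t * (\sum_k A i k * dd k) - t * dd i.
  move=> i; rewrite /C sumrB Arow; congr (_ - _).
  rewrite exchange_big mulr_sumr; apply: eq_bigr => j _.
  by rewrite -mulr_sumr Arow As; ring.
have lhsE : \sum_i \sum_k C i k * X i * X k =
   \sum_j ((\sum_i A j i * X i) ^+ 2 - X j * \sum_i A j i * X i).
  rewrite sumrB.
  have -> : \sum_j (\sum_i A j i * X i) ^+ 2 = \sum_i \sum_k (\sum_j A j i * A j k) * X i * X k.
    under eq_bigr => j _ do rewrite expr2 mulr_suml.
    rewrite exchange_big; apply: eq_bigr => i _.
    under eq_bigr => j _ do rewrite mulr_sumr.
    rewrite exchange_big; apply: eq_bigr => k _.
    rewrite !mulr_suml; apply: eq_bigr => j _; ring.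
  have -> : \sum_j X j * (\sum_i A j i * X i) = \sum_i \sum_k A i k * X i * X k.
    apply: eq_bigr => j _; rewrite mulr_sumr; apply: eq_bigr => i _; ring.
  rewrite -sumrB; apply: eq_bigr => i _; rewrite -sumrB; apply: eq_bigr => k _.
  rewrite /C; ring.
rewrite -(pmulr_rle0 _ t0) mulr_sumr.
have -> : \sum_j t * ((t * (a - dd j) ^+ 2 + a - \sum_k A j k * dd k) * X j ^+ 2)
  = \sum_j ((\sum_i A j i * X i) ^+ 2 - X j * \sum_i A j i * X i)
    - \sum_j (\sum_k C j k) * X j ^+ 2.
  rewrite -sumrB; apply: eq_bigr => j _; rewrite Eq rowC; ring.
by rewrite -lhsE subr_le0; apply: qf.
Qed.

Lemma fin (R : rcfType) (t d a P mi Dm : R) : 0 < t -> 0 <= d ->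
  t * (a - d)^+2 + a - P <= 0 -> P <= t * (d * mi * Dm) ->
  a <= (2 * d * t - 1 + Num.sqrt (4 * t ^+ 2 * d * mi * Dm - 2 * d * t + 1)) / (2 * t).
Proof.
move=> t0 d0 h1 h2.
have t20 : 0 < 2 * t by rewrite mulr_gt0.
rewrite ler_pdivlMr //.
set K := 4 * t ^+ 2 * d * mi * Dm - 2 * d * t + 1.
set y := 2 * t * a - 2 * d * t + 1.
have hy : y ^+ 2 <= K.
  have -> : y ^+ 2 = K + (4*t*(t*(a-d)^+2 + a - P) + 4*t*(P - t*(d*mi*Dm)) - 2*t*d).
    rewrite /y /K; ring.
  idtac.
  have e1 : 4*t*(t*(a-d)^+2 + a - P) <= 0 by rewrite pmulr_rle0 ?mulr_gt0 //.
  have e2 : 4*t*(P - t*(d*mi*Dm)) <= 0 by rewrite pmulr_rle0 ?mulr_gt0 // subr_le0.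
  have e3 : 0 <= 2*t*d by rewrite mulr_ge0 // ltW.
  lra.
have : y <= Num.sqrt K.
  apply: (le_trans (ler_norm y)); rewrite -sqrtr_sqr ler_sqrt //.
  exact: le_trans (sqr_ge0 y) hy.
rewrite /y; lra.
Qed.
Local Close Scope ring_scope.

Lemma card_sum (T : finType) (A : {set T}) (P : pred T) :
  #|[set e in A | P e]| = \sum_(e in A) (P e : nat).
Proof.
rewrite -sum1_card [RHS]big_mkcond [LHS]big_mkcond /=; apply: eq_bigr => e _.
by rewrite inE; case: (e \in A); case: (P e).
Qed.

Lemma sum_bool_card (T : finType) (P Q : pred T) :
  \sum_(j | P j) (Q j : nat) = #|[pred j | P j && Q j]|.
Proof. by rewrite -sum1_card big_mkcondr /=; apply: eq_bigr => j _; case: (Q j). Qed.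

Section H.
Variables (n : nat) (E : {set {set 'I_n}}).

Lemma codegC i j : hcodeg E i j = hcodeg E j i.
Proof. by rewrite /hcodeg; apply: eq_card => e; rewrite !inE [(i \in e) && _]andbC. Qed.

Lemma codegE i j : hcodeg E i j = \sum_(e in E) ((i \in e) && (j \in e) : nat).
Proof. by rewrite /hcodeg card_sum. Qed.

Lemma degE i : hdeg E i = \sum_(e in E) ((i \in e) : nat).
Proof. by rewrite /hdeg card_sum. Qed.

Lemma codeg_sum m : uniform E m -> forall j,
  \sum_(k | k != j) hcodeg E j k = (hdeg E j * (m - 1))%N.
Proof.
move=> U j; under eq_bigr => k _ do rewrite codegE.
rewrite exchange_big degE big_distrl /=; apply: eq_bigr => e eE.
case je: (j \in e) => /=; last by rewrite big1.
rewrite mul1n sum_bool_card.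
have -> : #|[pred k | (k != j) && (k \in e)]| = #|e :\ j| by apply: eq_card => k; rewrite !inE.
by move: (cardsD1 j e); rewrite je (U e eE) add1n => ->; rewrite subn1.
Qed.

Lemma codeg_tri m : (2 < m)%N -> uniform E m -> forall i k, i != k ->
  (hcodeg E i k <= \sum_(j | (j != i) && (j != k)) hcodeg E i j * hcodeg E j k)%N.
Proof.
move=> m2 U i k ik.
pose T j := \sum_(e in E) [&& i \in e, j \in e & k \in e] : nat.
apply: (@leq_trans (\sum_(j | (j != i) && (j != k)) T j)).
  rewrite /T exchange_big codegE; apply: leq_sum => e eE.
  case ie: (i \in e); case ke: (k \in e) => //=.
  rewrite sum_bool_card.
  have -> : #|[pred j | (j != i) && (j != k) & (j \in e) && true]| = #|e :\ i :\ k|.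
    by apply: eq_card => j; rewrite !inE; case: (j == i); case: (j == k); case: (j \in e).
  move: (cardsD1 i e) (cardsD1 k (e :\ i)); rewrite ie !inE ke eq_sym ik (U e eE) /= => h1 h2.
  by move: m2; rewrite h1 h2 !add1n !ltnS.
apply: leq_sum => j _.
have h1 : (T j <= hcodeg E i j)%N.
  rewrite /T codegE; apply: leq_sum => e _.
  by case: (i \in e); case: (j \in e); case: (k \in e).
have h2 : (T j <= hcodeg E j k)%N.
  rewrite /T codegE; apply: leq_sum => e _.
  by case: (i \in e); case: (j \in e); case: (k \in e).
nia.
Qed.

Lemma codeg_Dmax j k : k != j -> (hcodeg E j k <= Dmax E)%N.
Proof.
move=> kj; rewrite /Dmax.
apply: (@leq_trans (\max_(y | y != j) hcodeg E j y)).
  exact: (@leq_bigmax_cond _ (fun y => y != j) (fun y => hcodeg E j y) k kj).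
exact: (@leq_bigmax _ (fun x => \max_(y | y != x) hcodeg E x y) j).
Qed.

Lemma codeg_nadj j k : k != j -> ~~ hadj E j k -> hcodeg E j k = 0%N.
Proof.
rewrite /hadj eq_sym => -> /=.
move=> /existsPn h; apply/eqP; rewrite cards_eq0; apply/eqP/setP => e.
by rewrite !inE; move: (h e); rewrite negb_and; case: (e \in E) => //= /negbTE ->.
Qed.

Lemma P_bound j : (\sum_k (if j == k then 0 else hcodeg E j k) * hdeg E k
   <= Dmax E ^ 2 * \sum_(k | hadj E j k) hdeg E k)%N.
Proof.
rewrite big_distrr /= (bigID (hadj E j)) /=.
rewrite [X in (_ + X)%N]big1 ?addn0.
  apply: leq_sum => k hk.
  have kj : k != j by move: hk; rewrite /hadj eq_sym => /andP [].
  rewrite eq_sym (negbTE kj).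
  apply: leq_mul => //; apply: leq_trans (codeg_Dmax kj) _.
  by case: (Dmax E) => // D'; rewrite -mulnn leq_pmulr.
move=> k hk; case: eqP => [//|/eqP jk].
by rewrite codeg_nadj // eq_sym.
Qed.

Lemma deg0_adj j k : hdeg E j = 0%N -> ~~ hadj E j k.
Proof.
move=> /eqP; rewrite cards_eq0 => /eqP h; rewrite /hadj negb_and; apply/orP; right.
apply/existsPn => e; apply/negP => /andP [eE /andP [je _]].
have : e \in [set e in E | j \in e] by rewrite inE eE je.
by rewrite h inE.
Qed.

End H.
Local Open Scope ring_scope.
Theorem theorem12 (R : rcfType) (n m : nat) (E : {set {set 'I_n}}) :
  (2 < m)%N -> uniform E m -> hconnected E ->
  forall a : R, eigenvalue (hlaplacian E R m) a ->
  exists i : 'I_n, a <= bound_term E R m i.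
Proof.
move=> m2 U _ a /eigenvalueP [x Hx x0].
pose t : R := (m - 1)%:R.
pose A i j : R := (if i == j then 0%N else hcodeg E i j)%:R.
pose dd i : R := (hdeg E i)%:R.
pose X i := x 0 i.
have t0 : 0 < t by rewrite /t ltr0n subn_gt0 (ltn_trans _ m2).
have As : forall i j, A i j = A j i by move=> i j; rewrite /A eq_sym codegC.
have Arow : forall j, \sum_k A j k = t * dd j.
  move=> j; rewrite /A -natr_sum /t /dd -natrM mulnC -(codeg_sum U j).
  congr (_%:R); rewrite [RHS]big_mkcond; apply: eq_bigr => k _; rewrite [j == k]eq_sym; by case: (k == j).
have Atri : forall i k, i != k -> A i k <= \sum_j A i j * A j k.
  move=> i k0 ik; rewrite /A (negbTE ik).
  under eq_bigr => j _ do rewrite -natrM.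
  rewrite -natr_sum ler_nat; apply: leq_trans (codeg_tri m2 U ik) _.
  rewrite [X in (X <= _)%N]big_mkcond; apply: leq_sum => j _.
  by rewrite [i == j]eq_sym; case: (j == i); case: (j == k0).
have Eq : forall j, \sum_i A j i * X i = t * (dd j - a) * X j.
  move=> j; have := congr1 (fun M : 'rV[R]_n => M 0 j) Hx; rewrite !mxE (bigD1 j) //= => h.
  have Ajj : A j j = 0 by rewrite /A eqxx.
  rewrite (bigD1 j) //= Ajj mul0r add0r.
  have -> : \sum_(i | i != j) A j i * X i = - t * \sum_(i | i != j) x 0 i * hlaplacian E R m i j.
    rewrite mulr_sumr; apply: eq_bigr => i ij.
    rewrite /hlaplacian mxE (negbTE ij) /A eq_sym (negbTE ij) codegC /X.
    field; by rewrite lt0r_neq0.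
  have -> : \sum_(i | i != j) x 0 i * hlaplacian E R m i j = a * x 0 j - x 0 j * dd j.
    by rewrite -h /hlaplacian mxE eqxx /dd; ring.
  by rewrite /X; ring.
have K := key t0 As Atri Arow Eq.
pose coef j := t * (a - dd j) ^+ 2 + a - \sum_k A j k * dd k.
case: (boolP [exists j, coef j <= 0]) => [/existsP [j hj] | /existsPn hall].
  exists j; rewrite /bound_term; cbv zeta.
  apply: (@fin _ t (dd j) a (\sum_k A j k * dd k)) => //.
  have hP : \sum_k A j k * dd k <= (Dmax E)%:R ^+ 2 * (\sum_(k | hadj E j k) hdeg E k)%:R.
    rewrite /A /dd /=; under eq_bigr => k _ do rewrite -natrM.
    by rewrite -natr_sum -natrX -natrM ler_nat P_bound.
  apply: (le_trans hP); rewrite /mi.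
  have [d0|dn0] := eqVneq (hdeg E j) 0%N.
    have S0 : (\sum_(k | hadj E j k) hdeg E k = 0)%N.
      by rewrite big_pred0 // => k; apply/negbTE; exact: deg0_adj.
    by rewrite S0 !(mulr0, mul0r).
  rewrite le_eqVlt; apply/orP; left; apply/eqP; rewrite /t.
  field; apply/andP; split; first by rewrite lt0r_neq0.
  by rewrite pnatr_eq0.
exfalso.
have [j xj] : exists j, x 0 j != 0.
  apply/existsP; apply: contraR x0 => /existsPn h; apply/eqP/rowP => j.
  by rewrite !mxE; apply/eqP; move: (h j); rewrite negbK.
have hp : forall j, 0 < coef j by move=> k; rewrite ltNge hall.
move: K; apply/negP; rewrite -ltNge (bigD1 j) //=.
apply: ltr_pwDl.
  apply: mulr_gt0; first exact: hp.
  by rewrite lt0r sqr_ge0 andbT sqrf_eq0.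
apply: sumr_ge0 => k _; apply: mulr_ge0; [exact: (ltW (hp k)) | exact: sqr_ge0].
Qed.
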